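(* Let $X_1,X_2,\dots,X_n$ be independent random variables uniformly distributed on $[0,1]$, observed sequentially; at time $i$, after seeing $X_i$, one must irrevocably decide whether to select it, the selected values being required to form a monotone decreasing sequence $X_{i_1}>X_{i_2}>\cdots>X_{i_k}$ with $i_1<\cdots<i_k$, and decisions may depend only on $X_1,\dots,X_i$. Let $\widetilde V_n$ be the number of values selected under an optimal policy (one maximizing the expected number of selections); equivalently $\mathbb{E}[\widetilde V_n]=\widetilde v_n(1)$ where $\widetilde v_0\equiv0$ and $\widetilde v_n(x)=(1-x)\widetilde v_{n-1}(x)+\int_0^x\max\{\widetilde v_{n-1}(x),1+\widetilde v_{n-1}(y)\}dy$ for $x\in[0,1]$. Then $\mathbb{E}[\widetilde V_n]=\widetilde v_n(1)\le\sqrt{2n}$ for all $n\ge1$. *)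

(* Defs.v *)
From Stdlib Require Import Reals ClassicalEpsilon.
Open Scope R_scope.

(* The Riemann integral of f over [a,b], as a total function: the (unique)
   value RiemannInt pr for some integrability proof pr; if f is not Riemann
   integrable on [a,b] the value is an unspecified real. *)
Definition Rint (f : R -> R) (a b : R) : R :=
  epsilon (inhabits 0)
    (fun I => exists pr : Riemann_integrable f a b, RiemannInt pr = I).

Fixpoint vt (n : nat) (x : R) : R :=
  match n with
  | O => 0
  | S m => (1 - x) * vt m x + Rint (fun y => Rmax (vt m x) (1 + vt m y)) 0 x
  end.

(* Main.v *)
Require Import Defs.
From Stdlib Require Import Reals ClassicalEpsilon Lra Psatz.
From Coquelicot Require Import Coquelicot.
Open Scope R_scope.

Lemma Rint_RInt f a b : ex_RInt f a b -> Rint f a b = RInt f a b.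
Proof.
  intros H. unfold Rint.
  assert (E : exists I, exists pr : Riemann_integrable f a b, RiemannInt pr = I).
  { exists (RiemannInt (ex_RInt_Reals_0 _ _ _ H)). eexists; reflexivity. }
  destruct (epsilon_spec (inhabits 0) _ E) as [pr Hpr].
  rewrite <- Hpr. symmetry. apply RInt_Reals.
Qed.

Lemma abs_RInt_gen f a b M : ex_RInt f a b ->
  (forall t, Rmin a b <= t <= Rmax a b -> Rabs (f t) <= M) ->
  Rabs (RInt f a b) <= Rabs (b - a) * M.
Proof.
  intros Hi Hb. destruct (Rle_dec a b) as [Hab|Hab].
  - rewrite (Rabs_right (b - a)) by lra.
    apply abs_RInt_le_const; [lra|exact Hi|].
    intros t Ht; apply Hb. rewrite Rmin_left, Rmax_right; lra.
  - rewrite <- opp_RInt_swap by (apply ex_RInt_swap; auto).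
    rewrite (Rabs_left (b - a)) by lra.
    change (Rabs (- RInt f b a) <= - (b - a) * M).
    rewrite Rabs_Ropp. replace (- (b - a)) with (a - b) by ring.
    apply abs_RInt_le_const; [lra| apply ex_RInt_swap; auto|].
    intros t Ht; apply Hb. rewrite Rmin_right, Rmax_left; lra.
Qed.

Lemma Rmax_lip a b c : Rabs (Rmax a c - Rmax b c) <= Rabs (a - b).
Proof.
  unfold Rmax; repeat destruct Rle_dec; apply Rabs_le; split_Rabs; lra.
Qed.

Lemma Rmax_lip2 a b c : Rabs (Rmax c a - Rmax c b) <= Rabs (a - b).
Proof.
  unfold Rmax; repeat destruct Rle_dec; apply Rabs_le; split_Rabs; lra.
Qed.

Lemma cont_max (v : R -> R) c z : continuity_pt v z ->
  continuity_pt (fun y => Rmax c (1 + v y)) z.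
Proof.
  intros H. apply continuity_pt_locally. intros eps.
  apply continuity_pt_locally with (eps := eps) in H.
  destruct H as [d Hd]. exists d. intros y Hy.
  eapply Rle_lt_trans; [apply Rmax_lip2|].
  replace (1 + v y - (1 + v z)) with (v y - v z) by ring. apply Hd; auto.
Qed.

Lemma ex_h (v : R -> R) c a b : (forall y, continuity_pt v y) ->
  ex_RInt (fun y => Rmax c (1 + v y)) a b.
Proof.
  intros H. apply (@ex_RInt_continuous R_CompleteNormedModule). intros z _.
  apply continuity_pt_filterlim. apply cont_max; auto.
Qed.

Definition Fs (y : R) := 2 / 3 * (y * sqrt y).

Lemma Fs_derive y : 0 <= y -> is_derive Fs y (sqrt y).
Proof.
  intros Hy. destruct (Rle_lt_or_eq_dec _ _ Hy) as [Hp|H0].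
  - unfold Fs. auto_derive; [exact Hp|].
    pose proof (sqrt_lt_R0 y Hp).
    assert (sqrt y * sqrt y = y) by (apply sqrt_sqrt; lra).
    set (s := sqrt y) in *. rewrite <- H0. field. lra.

  - subst y. apply is_derive_Reals. intros eps Heps.
    assert (He2 : 0 < eps * eps) by nra.
    exists (mkposreal _ He2). intros h Hh Hhd. simpl in Hhd.
    unfold Fs. rewrite Rplus_0_l, Rmult_0_l, Rmult_0_r, sqrt_0, Rminus_0_r, Rminus_0_r.
    destruct (Rlt_or_le 0 h) as [hp|hn].
    + replace (2 / 3 * (h * sqrt h) / h) with (2/3 * sqrt h) by (field; lra).
      rewrite Rabs_right in Hhd by lra.
      assert (sqrt h < eps).
      { rewrite <- (sqrt_square eps) by lra. apply sqrt_lt_1; nra. }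
      pose proof (sqrt_pos h).
      rewrite Rabs_right; lra.
    + rewrite (sqrt_neg_0 h) by lra. rewrite Rmult_0_r, Rmult_0_r.
      unfold Rdiv. rewrite Rmult_0_l, Rabs_R0. lra.
Qed.

Lemma RInt_sqrt a b : 0 <= a -> 0 <= b -> RInt sqrt a b = Fs b - Fs a.
Proof.
  intros Ha Hb. apply is_RInt_unique.
  apply (is_RInt_derive (V := R_CompleteNormedModule) Fs sqrt).
  - intros x Hx. apply Fs_derive. 
    assert (0 <= Rmin a b) by (apply Rmin_glb; lra). lra.
  - intros x Hx. apply continuity_pt_filterlim. apply continuity_pt_sqrt.
    assert (0 <= Rmin a b) by (apply Rmin_glb; lra). lra.
Qed.

Lemma cont_J (v : R -> R) x : (forall y, continuity_pt v y) ->
  continuity_pt (fun x => Rint (fun y => Rmax (v x) (1 + v y)) 0 x) x.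
Proof.
  intros Hc. apply continuity_pt_locally. intros eps.
  set (eta := Rmin 1 (eps / (2 * (Rabs x + 1)))).
  assert (Heta : 0 < eta).
  { unfold eta. apply Rmin_pos; [lra|]. pose proof (cond_pos eps).
    apply Rdiv_lt_0_compat; [lra|]. pose proof (Rabs_pos x); lra. }
  pose proof (proj1 (continuity_pt_locally v x) (Hc x) (mkposreal _ Heta)) as [d Hd].
  simpl in Hd.
  set (M := Rabs (v x) + 2).
  assert (HM : 0 < M) by (unfold M; pose proof (Rabs_pos (v x)); lra).
  set (dl := Rmin d (eps / (2 * M))).
  assert (Hdl : 0 < dl).
  { unfold dl. apply Rmin_pos; [apply cond_pos|]. pose proof (cond_pos eps).
    apply Rdiv_lt_0_compat; lra. }
  exists (mkposreal _ Hdl). intros u Hu.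
  change (Rabs (u - x) < dl) in Hu.
  assert (Hud : Rabs (u - x) < d) by (eapply Rlt_le_trans; [exact Hu| apply Rmin_l]).
  assert (Hvu : Rabs (v u - v x) < eta) by (apply Hd; exact Hud).
  rewrite !Rint_RInt by (apply ex_h; auto).
  rewrite <- (RInt_Chasles (fun y => Rmax (v u) (1 + v y)) 0 x u) by (apply ex_h; auto).
  change (plus ?a ?b) with (a + b).
  replace (RInt (fun y => Rmax (v u) (1 + v y)) 0 x +
     RInt (fun y => Rmax (v u) (1 + v y)) x u - RInt (fun y => Rmax (v x) (1 + v y)) 0 x)
   with ((RInt (fun y => Rmax (v u) (1 + v y)) 0 x - RInt (fun y => Rmax (v x) (1 + v y)) 0 x)
     + RInt (fun y => Rmax (v u) (1 + v y)) x u) by ring.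
  assert (E1 : Rabs (RInt (fun y => Rmax (v u) (1 + v y)) 0 x - RInt (fun y => Rmax (v x) (1 + v y)) 0 x)
     <= Rabs (x - 0) * eta).
  { rewrite <- (RInt_minus (V := R_CompleteNormedModule)) by (apply ex_h; auto).
    apply abs_RInt_gen.
    - apply (ex_RInt_minus (V := R_NormedModule)); apply ex_h; auto.
    - intros t _. change (Rabs (Rmax (v u) (1 + v t) - Rmax (v x) (1 + v t)) <= eta).
      eapply Rle_trans; [apply Rmax_lip| lra]. }
  assert (E2 : Rabs (RInt (fun y => Rmax (v u) (1 + v y)) x u) <= Rabs (u - x) * M).
  { apply abs_RInt_gen; [apply ex_h; auto|].
    intros t Ht.
    assert (Htx : Rabs (t - x) < d).
    { apply Rle_lt_trans with (Rabs (u - x)); [|exact Hud].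
      destruct Ht as [Ht1 Ht2]. destruct (Rle_dec x u).
      - rewrite Rmin_left in Ht1 by lra; rewrite Rmax_right in Ht2 by lra.
        rewrite !Rabs_right by lra; lra.
      - rewrite Rmin_right in Ht1 by lra; rewrite Rmax_left in Ht2 by lra.
        rewrite !Rabs_left1 by lra; lra. }
    pose proof (Hd t Htx) as Hvt. simpl in Hvt.
    assert (eta <= 1) by apply Rmin_l.
    unfold M. unfold Rmax. destruct Rle_dec; split_Rabs; lra. }
  assert (E3 : Rabs (x - 0) * eta <= eps / 2).
  { rewrite Rminus_0_r. pose proof (Rabs_pos x).
    apply Rle_trans with (Rabs x * (eps / (2 * (Rabs x + 1)))).
    - apply Rmult_le_compat_l; [lra| apply Rmin_r].
    - pose proof (cond_pos eps).
      apply Rle_trans with ((Rabs x + 1) * (eps / (2 * (Rabs x + 1)))).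
      + apply Rmult_le_compat_r; [|lra]. apply Rlt_le, Rdiv_lt_0_compat; lra.
      + right. field. lra. }
  assert (E4 : Rabs (u - x) * M < eps / 2).
  { apply Rlt_le_trans with (dl * M).
    - apply Rmult_lt_compat_r; auto.
    - apply Rle_trans with (eps / (2 * M) * M).
      + apply Rmult_le_compat_r; [lra| apply Rmin_r].
      + right. field. lra. }
  eapply Rle_lt_trans; [apply Rabs_triang|]. lra.
Qed.

Lemma vt_cont n : forall y, continuity_pt (vt n) y.
Proof.
  induction n; intros y.
  - simpl. apply continuity_pt_const. intros a b; reflexivity.
  - change (continuity_pt (fun x => (1 - x) * vt n x + Rint (fun y => Rmax (vt n x) (1 + vt n y)) 0 x) y).
    apply (continuity_pt_plus (fun x => (1 - x) * vt n x)).
    + apply (continuity_pt_mult (fun x => 1 - x)); auto.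
      apply (continuity_pt_minus (fun _ => 1)); [apply continuity_pt_const; intros a b; reflexivity|apply continuity_pt_id].
    + apply cont_J; auto.
Qed.

Lemma cont_lin c y : 0 <= y -> continuity_pt (fun y => 1 + c * sqrt y) y.
Proof.
  intros Hy. apply (continuity_pt_plus (fun _ => 1)).
  - apply continuity_pt_const; intros a b; reflexivity.
  - apply (continuity_pt_mult (fun _ => c)).
    + apply continuity_pt_const; intros a b; reflexivity.
    + apply continuity_pt_sqrt; auto.
Qed.

Lemma RInt_lin c a b : 0 <= a -> 0 <= b ->
  RInt (fun y => 1 + c * sqrt y) a b = (b - a) + c * (Fs b - Fs a).
Proof.
  intros Ha Hb. apply is_RInt_unique.
  replace ((b - a) + c * (Fs b - Fs a)) with ((b + c * Fs b) - (a + c * Fs a)) by ring.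
  apply (is_RInt_derive (V := R_CompleteNormedModule) (fun y => y + c * Fs y)).
  - intros x Hx. assert (0 <= Rmin a b) by (apply Rmin_glb; lra).
    apply (is_derive_plus (K := R_AbsRing) (V := R_NormedModule) (fun y => y) (fun y => c * Fs y)).
    + exact (is_derive_id (K := R_AbsRing) x).
    + apply is_derive_scal. apply Fs_derive. lra.
  - intros x Hx. assert (0 <= Rmin a b) by (apply Rmin_glb; lra).
    apply continuity_pt_filterlim. apply cont_lin. lra.
Qed.

Lemma ex_maxs c k a b : 0 <= a -> 0 <= b -> ex_RInt (fun y => Rmax k (1 + c * sqrt y)) a b.
Proof.
  intros Ha Hb. apply (@ex_RInt_continuous R_CompleteNormedModule). intros z Hz.
  assert (0 <= Rmin a b) by (apply Rmin_glb; lra).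
  apply continuity_pt_filterlim.
  apply (cont_max (fun y => c * sqrt y)).
  apply (continuity_pt_mult (fun _ => c)).
  + apply continuity_pt_const; intros u v; reflexivity.
  + apply continuity_pt_sqrt; lra.
Qed.

Lemma sq_le a b : 0 <= b -> a * a <= b * b -> a <= b.
Proof. intros. nra. Qed.

Lemma A c d e : 2 <= c * c -> 0 < c -> c * e = 1 -> d * d = c * c + 2 -> 0 <= d -> c + e - e * e / 3 <= d.
Proof.
  intros Hc2 Hc Hce Hd Hd0.
  assert (He : 0 < e) by nra.
  assert (Hc1 : 1 <= c) by nra.
  assert (P : 0 <= 6 * c * c * c - 9 * c * c + 6 * c - 1) by nra.
  apply sq_le; auto. rewrite Hd.
  assert (Q : e * e + e*e*e*e/9 - 2*e/3 - 2*e*e*e/3 <= 0).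
  { assert (E : e * e + e*e*e*e/9 - 2*e/3 - 2*e*e*e/3 = - (e*e*e*e) * (6 * c * c * c - 9 * c * c + 6 * c - 1) / 9).
    { assert (e = / c) by (field_simplify_eq; lra). subst e. field. lra. }
    rewrite E. assert (0 <= e*e*e*e) by (apply Rmult_le_pos; nra). nra. }
  nra.
Qed.

Lemma key c d x : 2 <= c * c -> 0 < c -> d * d = c * c + 2 -> 0 <= d -> 0 <= x <= 1 ->
  (1 - x) * (c * sqrt x) + RInt (fun y => Rmax (c * sqrt x) (1 + c * sqrt y)) 0 x
  <= d * sqrt x.
Proof.
  intros Hc2 Hc Hd Hd0 Hx.
  set (s := sqrt x).
  assert (Hs0 : 0 <= s) by apply sqrt_pos.
  assert (Hss : s * s = x) by (apply sqrt_sqrt; lra).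
  assert (Hs1 : s <= 1) by nra.
  destruct (Rle_dec (c * s) 1) as [Hcs|Hcs].
  - rewrite (RInt_ext _ (fun y => 1 + c * sqrt y)).
    2:{ intros y Hy. rewrite Rmin_left, Rmax_right in Hy by lra.
        pose proof (sqrt_pos y). apply Rmax_right. nra. }
    rewrite RInt_lin by lra.
    unfold Fs. rewrite Rmult_0_l, Rmult_0_r, Rminus_0_r, Rminus_0_r.
    fold s. rewrite <- Hss.
    assert (H1 : c + s - c * (s * s) / 3 <= c + 2 / (3 * c)).
    { apply Rmult_le_reg_l with (3 * c); [lra|].
      replace (3 * c * (c + s - c * (s * s) / 3)) with (3 * c * c + 3 * (c * s) - (c * s) * (c * s)) by field.
      replace (3 * c * (c + 2 / (3 * c))) with (3 * c * c + 2) by (field; lra).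
      assert (0 <= c * s) by nra. nra. }
    assert (H2 : c + 2 / (3 * c) <= d).
    { apply sq_le; auto.
      replace ((c + 2 / (3 * c)) * (c + 2 / (3 * c))) with (c * c + 4 / 3 + 4 / (9 * (c * c))) by (field; lra).
      rewrite Hd. assert (4 / (9 * (c * c)) <= 2 / 3).
      { apply Rmult_le_reg_l with (9 * (c * c)); [nra|].
        replace (9 * (c * c) * (4 / (9 * (c * c)))) with 4 by (field; lra). nra. }
      lra. }
    replace ((1 - s * s) * (c * s) + (s * s + c * (2 / 3 * (s * s * s))))
      with (s * (c + s - c * (s * s) / 3)) by field.
    rewrite (Rmult_comm d). apply Rmult_le_compat_l; lra.
  - set (e := / c).
    assert (Hce : c * e = 1) by (unfold e; field; lra).
    assert (He : 0 < e) by (unfold e; apply Rinv_0_lt_compat; lra).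
    set (b := s - e).
    assert (Hb : 0 < b) by (unfold b; nra).
    assert (Hcb : c * b = c * s - 1) by (unfold b; rewrite Rmult_minus_distr_l, Hce; ring).
    set (a := b * b).
    assert (Hsa : sqrt a = b) by (unfold a; apply sqrt_square; lra).
    assert (Ha0 : 0 <= a) by (unfold a; nra).
    assert (Hax : a <= x) by (unfold a, b; nra).
    rewrite <- (RInt_Chasles (V := R_CompleteNormedModule) _ 0 a x) by (apply ex_maxs; lra).
    change (plus ?p ?q) with (p + q).
    rewrite (RInt_ext (fun y => Rmax (c * s) (1 + c * sqrt y)) (fun _ => c * s) 0 a).
    2:{ intros y Hy. rewrite Rmin_left, Rmax_right in Hy by lra.
        assert (sqrt y < b) by (rewrite <- Hsa; apply sqrt_lt_1; lra).
        assert (c * sqrt y < c * b) by (apply Rmult_lt_compat_l; lra).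
        apply Rmax_left. lra. }
    rewrite (RInt_ext (fun y => Rmax (c * s) (1 + c * sqrt y)) (fun y => 1 + c * sqrt y) a x).
    2:{ intros y Hy. rewrite Rmin_left, Rmax_right in Hy by lra.
        assert (b < sqrt y) by (rewrite <- Hsa; apply sqrt_lt_1; lra).
        assert (c * b < c * sqrt y) by (apply Rmult_lt_compat_l; lra).
        apply Rmax_right. lra. }
    rewrite RInt_const, RInt_lin by lra.
    change (scal ?p ?q) with (p * q).
    unfold Fs. rewrite Hsa. fold s. rewrite <- Hss. unfold a.
    replace ((1 - s * s) * (c * s) + ((b * b - 0) * (c * s) + (s * s - b * b + c * (2 / 3 * (s * s * s) - 2 / 3 * (b * b * b)))))
      with (s * (c + e) - e * e / 3).
    2:{ unfold b, e. field. lra. }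
    assert (HA := A c d e Hc2 Hc Hce Hd Hd0).
    assert (HB : d <= c + e).
    { apply sq_le; [lra|]. rewrite Hd. nra. }
    nra.
Qed.

Lemma bound n : forall x, 0 <= x <= 1 -> vt n x <= sqrt (2 * INR n) * sqrt x.
Proof.
  induction n; intros x Hx.
  - simpl. apply Rmult_le_pos; apply sqrt_pos.
  - change (vt (S n) x) with ((1 - x) * vt n x + Rint (fun y => Rmax (vt n x) (1 + vt n y)) 0 x).
    rewrite Rint_RInt by (apply ex_h; apply vt_cont).
    set (c := sqrt (2 * INR n)).
    assert (Hc0 : 0 <= c) by apply sqrt_pos.
    apply Rle_trans with ((1 - x) * (c * sqrt x) + RInt (fun y => Rmax (c * sqrt x) (1 + c * sqrt y)) 0 x).
    { apply Rplus_le_compat.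
      - apply Rmult_le_compat_l; [lra|]. apply IHn; auto.
      - apply RInt_le; [lra| apply ex_h; apply vt_cont | apply ex_maxs; lra|].
        intros y Hy. pose proof (IHn x Hx). pose proof (IHn y ltac:(lra)).
        apply Rmax_lub.
        + eapply Rle_trans; [|apply Rmax_l]. unfold c in *. lra.
        + eapply Rle_trans; [|apply Rmax_r]. unfold c in *. lra. }
    assert (Hsx : 0 <= sqrt x) by apply sqrt_pos.
    assert (Hss : sqrt x * sqrt x = x) by (apply sqrt_sqrt; lra).
    destruct n.
    + assert (c = 0) by (unfold c; simpl; rewrite Rmult_0_r; apply sqrt_0).
      rewrite H.
      rewrite (RInt_ext _ (fun _ => 1)).
      2:{ intros y _. rewrite !Rmult_0_l, Rplus_0_r. apply Rmax_right. lra. }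
      rewrite RInt_const. change (scal ?p ?q) with (p * q).
      assert (1 <= sqrt (2 * INR 1)).
      { rewrite <- sqrt_1 at 1. apply sqrt_le_1_alt. simpl. lra. }
      assert (sqrt x <= 1) by nra.
      nra.
    + apply key.
      * unfold c. rewrite sqrt_sqrt; [|pose proof (pos_INR (S n)); lra].
        rewrite S_INR. pose proof (pos_INR n); lra.
      * unfold c. apply sqrt_lt_R0. rewrite S_INR. pose proof (pos_INR n); lra.
      * unfold c. rewrite !sqrt_sqrt; [rewrite (S_INR (S n)); ring| |];
          rewrite ?S_INR; pose proof (pos_INR n); lra.
      * apply sqrt_pos.
      * exact Hx.
Qed.

Theorem mainTheorem4 (n : nat) (hn : (1 <= n)%nat) : vt n 1 <= sqrt (2 * INR n).
Proof.
  pose proof (bound n 1 ltac:(lra)) as H. rewrite sqrt_1, Rmult_1_r in H. exact H.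
Qed.
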